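(* For all $n\ge1$, $u_{2n}(0)=\dfrac{n+1}{2^n}$.
   Context: The rational functions $u_{2n}(a)$ are defined by $(a^2+1)u_2=1$ and, for $n\ge2$, $(a^2+n^2)u_{2n}=3u_{2(n-1)}+3\sum_{j_1+j_2=n-1}u_{2j_1}u_{2j_2}+\sum_{j_1+j_2+j_3=n-1}u_{2j_1}u_{2j_2}u_{2j_3}-\sum_{1\le j_1,\,2j_1<n}(n-2j_1)^2u_{2j_1}u_{2(n-j_1)}$, all indices $j_i\ge1$. They are the Taylor coefficients of the solution of the degenerate third Painlevé equation vanishing at $\tau=0$. *)

(* Defs.v *)
From HB Require Import structures.
From mathcomp Require Import all_boot all_order all_algebra.
Set Implicit Arguments. Unset Strict Implicit. Unset Printing Implicit Defensive.
Import Order.TTheory GRing.Theory Num.Theory.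
Local Open Scope ring_scope.

(* Taylor coefficients u_{2n}(a) of the degenerate PIII solution, evaluated
   pointwise at a : R (R a real field, so a^2 + n^2 <> 0 for n >= 1). *)
Section U.
Variable R : realFieldType.
Variable a : R.

(* given s = [:: u_2; u_4; ...; u_{2(n-1)}], [uu s j] is u_{2j} for j >= 1 *)
Definition uu (s : seq R) (j : nat) : R := nth 0 s j.-1.

Definition u_rhs (s : seq R) (n : nat) : R :=
  3 * uu s n.-1
  + 3 * (\sum_(1 <= j1 < n.-1) uu s j1 * uu s (n.-1 - j1))
  + (\sum_(1 <= j1 < n.-1) \sum_(1 <= j2 < n.-1 - j1)
        uu s j1 * uu s j2 * uu s (n.-1 - j1 - j2))
  - (\sum_(1 <= j1 < n | (2 * j1 < n)%N)
        ((n - 2 * j1)%:R) ^+ 2 * uu s j1 * uu s (n - j1)).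

Definition u_next (s : seq R) (n : nat) : R :=
  if n == 1%N then (a ^+ 2 + 1)^-1
  else u_rhs s n / (a ^+ 2 + (n%:R) ^+ 2).

(* useq n = [:: u_2; ...; u_{2n}] *)
Fixpoint useq (n : nat) : seq R :=
  match n with
  | 0 => [::]
  | m.+1 => rcons (useq m) (u_next (useq m) m.+1)
  end.

(* u n = u_{2n}(a), for n >= 1 *)
Definition u (n : nat) : R := nth 0 (useq n) n.-1.
End U.

(* Main.v *)
Require Import Defs.
From HB Require Import structures.
From mathcomp Require Import all_boot all_order all_algebra.
From mathcomp Require Import ring lra zify.
Import Order.TTheory GRing.Theory Num.Theory.
Local Open Scope ring_scope.

Section S.
Variable R : realFieldType.
Definition FA (x k : R) : R := 0 + (5%:R) * (6%:R)^-1 * k + (1%:R) * (2%:R)^-1 * k * k - (1%:R) * (3%:R)^-1 * k * k * k + (1%:R) * (2%:R)^-1 * x * k + (1%:R) * (2%:R)^-1 * x * k * k.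
Definition Apol (x : R) : R := 0 - (1%:R) - (1%:R) * (6%:R)^-1 * x + (1%:R) * x * x + (1%:R) * (6%:R)^-1 * x * x * x.
Definition FB (x k : R) : R := 0 - (23%:R) * (60%:R)^-1 * k - (19%:R) * (24%:R)^-1 * k * k - (1%:R) * (12%:R)^-1 * k * k * k + (7%:R) * (24%:R)^-1 * k * k * k * k - (1%:R) * (30%:R)^-1 * k * k * k * k * k + (2%:R) * (3%:R)^-1 * x * k - (5%:R) * (24%:R)^-1 * x * k * k - (3%:R) * (4%:R)^-1 * x * k * k * k + (1%:R) * (8%:R)^-1 * x * k * k * k * k + (2%:R) * (3%:R)^-1 * x * x * k + (1%:R) * (2%:R)^-1 * x * x * k * k - (1%:R) * (6%:R)^-1 * x * x * k * k * k + (1%:R) * (12%:R)^-1 * x * x * x * k + (1%:R) * (12%:R)^-1 * x * x * x * k * k.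
Definition Bpol (x : R) : R := 0 + (1%:R) - (13%:R) * (60%:R)^-1 * x - (9%:R) * (8%:R)^-1 * x * x + (5%:R) * (24%:R)^-1 * x * x * x + (1%:R) * (8%:R)^-1 * x * x * x * x + (1%:R) * (120%:R)^-1 * x * x * x * x * x.
Definition FC (x k : R) : R := 0 + (4%:R) * (5%:R)^-1 * k - (2%:R) * k * k + (2%:R) * k * k * k * k - (4%:R) * (5%:R)^-1 * k * k * k * k * k + (8%:R) * (3%:R)^-1 * x * k - (2%:R) * x * k * k - (8%:R) * (3%:R)^-1 * x * k * k * k + (2%:R) * x * k * k * k * k + (13%:R) * (6%:R)^-1 * x * x * k + (1%:R) * (2%:R)^-1 * x * x * k * k - (5%:R) * (3%:R)^-1 * x * x * k * k * k + (1%:R) * (2%:R)^-1 * x * x * x * k + (1%:R) * (2%:R)^-1 * x * x * x * k * k.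

Lemma sumA (M : nat) : (1 <= M)%N ->
  \sum_(1 <= j < M) ((j%:R + 1) * (M%:R + 1 - j%:R)) = Apol M%:R.
Proof.
move=> hM.
rewrite (telescope_sumr_eq (fun k : nat => FA M%:R k%:R)) //.
  by rewrite /FA /Apol; field.
by move=> k _; rewrite /FA -addn1 natrD; field.
Qed.

Lemma sumB (M : nat) : (1 <= M)%N ->
  \sum_(1 <= j < M) ((j%:R + 1) * Apol (M%:R - j%:R)) = Bpol M%:R.
Proof.
move=> hM.
rewrite (telescope_sumr_eq (fun k : nat => FB M%:R k%:R)) //.
  by rewrite /FB /Bpol; field.
by move=> k _; rewrite /FB /Apol -addn1 natrD; field.
Qed.

Lemma sumC (m : R) (P : nat) : (1 <= P)%N ->
  \sum_(1 <= j < P) ((m - 2 * j%:R) ^+ 2 * (j%:R + 1) * (m + 1 - j%:R))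
  = FC m P%:R - FC m 1%:R.
Proof.
move=> hP.
rewrite (telescope_sumr_eq (fun k : nat => FC m k%:R)) //.
by move=> k _; rewrite /FC -addn1 natrD; field.
Qed.

Definition q : R := 2^-1.
Definition g (j : nat) : R := j.+1%:R * q ^+ j.

Lemma gg (a b n : nat) : (a + b = n)%N ->
  g a * g b = q ^+ n * ((a%:R + 1) * (b%:R + 1)).
Proof. by move=> <-; rewrite /g exprD -!natr1; ring. Qed.

Lemma filt (n : nat) (F : nat -> R) :
  \sum_(1 <= j < n.+1 | (2 * j < n.+1)%N) F j = \sum_(1 <= j < (n./2).+1) F j.
Proof.
rewrite (big_cat_nat _ (n := (n./2).+1)) //=; last by lia.
rewrite [X in _ + X]big_nat_cond [X in _ + X]big1 ?addr0; last first.
  move=> j /andP[/andP[h1 h2] h3]; exfalso; lia.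
rewrite big_nat_cond [RHS]big_nat_cond; apply: eq_bigl => j.
apply/idP/idP; move=> /andP[/andP[h1 h2] h3]; rewrite h1 h2 /=; lia.
Qed.

Lemma key2 (s : seq R) (N : nat) : (1 <= N)%N ->
  (forall j : nat, (0 < j <= N)%N -> uu (R:=R) s j = g j) ->
  (3 * uu (R:=R) s N +
   3 * \sum_(1 <= j1 < N) uu (R:=R) s j1 * uu (R:=R) s (N - j1) +
   \sum_(1 <= j1 < N)
      \sum_(1 <= j2 < N - j1)
         uu (R:=R) s j1 * uu (R:=R) s j2 * uu (R:=R) s (N - j1 - j2) -
   \sum_(1 <= j1 < N.+1 | (2 * j1 < N.+1)%N)
      (N.+1 - 2 * j1)%:R ^+ 2 * uu (R:=R) s j1 * uu (R:=R) s (N.+1 - j1)) /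
  (0 ^+ 2 + N.+1%:R ^+ 2) = g N.+1.
Proof.
move=> hN huu.
rewrite (huu N) ?hN ?leqnn //.
have T2 : \sum_(1 <= j1 < N) uu s j1 * uu s (N - j1) = q^+N * Apol N%:R.
  rewrite -sumA // mulr_sumr; apply: eq_big_nat => j hj.
  rewrite !huu; try lia.
  rewrite (@gg _ _ N); last lia.
  rewrite natrB; [ring|lia].
have T3 : \sum_(1 <= j1 < N) \sum_(1 <= j2 < N - j1)
         uu s j1 * uu s j2 * uu s (N - j1 - j2) = q^+N * Bpol N%:R.
  rewrite -sumB // mulr_sumr; apply: eq_big_nat => j hj.
  rewrite -natrB; last lia.
  rewrite -sumA; last lia.
  rewrite !mulr_sumr; apply: eq_big_nat => k hk.
  rewrite !huu; try lia.
  rewrite -mulrA (@gg _ _ (N - j)); last lia.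
  rewrite (_ : q^+N = q^+j * q^+(N-j)); last by rewrite -exprD subnKC //; lia.
  rewrite (natrB _ (_ : k <= N - j)%N); last lia.
  rewrite /g; ring.
have T4 : \sum_(1 <= j1 < N.+1 | (2 * j1 < N.+1)%N)
      (N.+1 - 2 * j1)%:R ^+ 2 * uu s j1 * uu s (N.+1 - j1)
   = q^+(N.+1) * (FC N.+1%:R (N./2).+1%:R - FC N.+1%:R 1%:R).
  rewrite filt -sumC // mulr_sumr; apply: eq_big_nat => j hj.
  rewrite !huu; try lia.
  rewrite -mulrA (@gg _ _ N.+1); last lia.
  rewrite (natrB _ (_ : 2 * j <= N.+1)%N); last lia.
  rewrite (natrB _ (_ : j <= N.+1)%N); last lia.
  rewrite natrM; ring.
rewrite T2 T3 T4 /g exprSr.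
have hp := odd_double_half N.
have E : (N%:R : R) = (odd N)%:R + 2 * (N./2)%:R.
  by rewrite -[in LHS]hp natrD -mul2n natrM.
move: (N./2) E => p E.
rewrite -!natr1 E.
case: (odd N) => /=.
all: rewrite /Apol /Bpol /FC /q; field.
all: apply: lt0r_neq0; have := ler0n R p; lra.
Qed.

Lemma key (s : seq R) (n : nat) :
  (forall i, (i < n)%N -> nth 0 s i = g i.+1) ->
  u_next 0 s n.+1 = g n.+1.
Proof.
move=> hs.
have huu : forall j, (1 <= j <= n)%N -> uu s j = g j.
  by move=> j /andP[h1 h2]; rewrite /uu hs ?prednK //; lia.
rewrite /u_next; case: n hs huu => [|n] hs huu.
  by rewrite /= /g /q expr1 expr0n /= add0r invr1; field.
rewrite /u_rhs /=.
exact: key2.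
Qed.


Lemma useq_spec (n : nat) : size (useq (0:R) n) = n /\
  forall i, (i < n)%N -> nth 0 (useq (0:R) n) i = g i.+1.
Proof.
elim: n => [|n [hsz hn]] //=.
split; first by rewrite size_rcons hsz.
move=> i hi; rewrite nth_rcons hsz.
case: ltnP => h1; first exact: hn.
have -> : i = n by lia.
by rewrite eqxx; apply: key.
Qed.
End S.

Theorem proposition10 (R : realFieldType) (n : nat) :
  (1 <= n)%N -> u (0 : R) n = (n.+1)%:R / 2 ^+ n.
Proof.
move=> hn; rewrite /u (proj2 (useq_spec R n)); last lia.
by rewrite prednK // /g /q exprVn.
Qed.
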